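(* Let $m,n\ge 2$ and let $W$ be a channel from $\{1,\dots,m\}$ to $\{1,\dots,n\}$. Let $\alpha_j=\min_{1\le i\le m}W_{i,j}$ for $1\le j\le n$. Then $\overline{P}_W(1)=\sum_{j=1}^n\alpha_j$, and \[ \underline{C}_{11}(W)\ge 1-\overline{P}_W(1). \] If $\overline{P}_W(1)=1$, then $\underline{C}_{11}(W)\le 0$. If $\overline{P}_W(1)<1$, define \[ W'=\frac{W-\sum_{j=1}^n\alpha_j\mathrm{U}_j}{1-\overline{P}_W(1)},\qquad a=\lfloor \mathbf{1}W'\rfloor\ (\text{entrywise}),\qquad \gamma=\Big(m+\mathrm{w}(a)-\sum_{j=1}^n a_j\Big)\wedge n; \] then $\underline{C}_{11}(W)\le (1-\overline{P}_W(1))\log_2\gamma$. Moreover, if $m=2$ or $n=2$, then $\underline{C}_{11}(W)=1-\overline{P}_W(1)$.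
   Context: A channel from $\mathcal{X}=\{1,\dots,m\}$ to $\mathcal{Y}=\{1,\dots,n\}$ is an $m\times n$ row-stochastic matrix $W=(W_{x,y})$. A deterministic channel is a channel whose entries are all $0$ or $1$; it is identified with the map $D:\mathcal{X}\to\mathcal{Y}$ with $D(x)=y$ iff $D_{x,y}=1$. $\mathcal{D}$ is the set of all deterministic channels, and $\mathrm{rank}(D)$ is the matrix rank (the number of nonzero columns). $\mathrm{U}_j$ denotes the deterministic channel whose $j$-th column is all ones. $\Lambda(W)=\{\lambda \text{ probability distribution on }\mathcal{D}: W=\sum_{D\in\mathcal{D}}\lambda_D D\}$. For $\lambda$ a probability distribution on $\mathcal{D}$, $C_{11}(\lambda)=\sum_D\lambda_D\log_2\mathrm{rank}(D)$, and $\underline{C}_{11}(W)=\inf\{C_{11}(\lambda):\lambda\in\Lambda(W)\}$. For $\lambda\in\Lambda(W)$, $P_\lambda(r)=\lambda(\{D\in\mathcal{D}:\mathrm{rank}(D)=r\})$ and $\overline{P}_W(r)=\max_{\lambda\in\Lambda(W)}P_\lambda(r)$. $\mathbf{1}$ is the all-one row vector of length $m$ (so $\mathbf{1}W$ is the vector of column sums). For a vector $a$, $\mathrm{w}(a)$ is the number of its nonzero entries; $x\wedge y=\min(x,y)$. *)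

(* Defs.v *)
From HB Require Import structures.
From mathcomp Require Import all_boot all_order all_algebra.
From mathcomp Require Import all_classical all_reals all_analysis.
Set Implicit Arguments. Unset Strict Implicit. Unset Printing Implicit Defensive.
Import Order.TTheory GRing.Theory Num.Theory.
Local Open Scope classical_set_scope.
Local Open Scope ring_scope.

Section Channels.
Variables (R : realType) (m n : nat).

Definition channel (W : 'M[R]_(m, n)) : Prop :=
  (forall i j, 0 <= W i j) /\ (forall i, \sum_j W i j = 1).

(* deterministic channels are identified with maps X -> Y *)
Definition detch := {ffun 'I_m -> 'I_n}.

Definition detmx (D : detch) : 'M[R]_(m, n) :=
  \matrix_(x, y) (D x == y)%:R.

Definition drank (D : detch) : nat := \rank (detmx D).

Definition Uch (j : 'I_n) : detch := [ffun _ => j].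

Definition log2 (x : R) : R := ln x / ln 2.

Definition distr_on (lam : {ffun detch -> R}) : Prop :=
  (forall D, 0 <= lam D) /\ \sum_D lam D = 1.

Definition Lambda (W : 'M[R]_(m, n)) : set {ffun detch -> R} :=
  [set lam | distr_on lam /\ W = \sum_D lam D *: detmx D].

Definition C11 (lam : {ffun detch -> R}) : R :=
  \sum_D lam D * log2 (drank D)%:R.

Definition C11low (W : 'M[R]_(m, n)) : R :=
  inf [set C11 lam | lam in Lambda W].

Definition Plam (lam : {ffun detch -> R}) (r : nat) : R :=
  \sum_(D | drank D == r) lam D.

(* \overline{P}_W(r) = max over Lambda(W); defined as the sup, the theorem
   additionally asserts it is attained *)
Definition Pbar (W : 'M[R]_(m, n)) (r : nat) : R :=
  sup [set Plam lam r | lam in Lambda W].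

(* alpha_j = min_i W_{i,j}; the fold starts from 1, which is harmless since
   channel entries are <= 1 (and m >= 1) *)
Definition alpha (W : 'M[R]_(m, n)) (j : 'I_n) : R := \big[Num.min/1]_i W i j.

Definition Wprime (W : 'M[R]_(m, n)) : 'M[R]_(m, n) :=
  (1 - Pbar W 1)^-1 *: (W - \sum_j alpha W j *: detmx (Uch j)).

Definition avec (W : 'M[R]_(m, n)) (j : 'I_n) : int :=
  Num.floor (\sum_i Wprime W i j).

Definition gamma (W : 'M[R]_(m, n)) : int :=
  Num.min ((m + #|[set j | avec W j != 0]|)%:Z - \sum_j avec W j) n%:Z.

End Channels.

Arguments detch : clear implicits.

(* Main.v *)
Require Import Defs.
From HB Require Import structures.
From mathcomp Require Import all_boot all_order all_algebra.
From mathcomp Require Import all_classical all_reals all_analysis.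
From mathcomp Require Import zify ring lra.
Set Implicit Arguments. Unset Strict Implicit. Unset Printing Implicit Defensive.
Import Order.TTheory GRing.Theory Num.Theory.
Local Open Scope ring_scope.


Section Rank.
Variables (R : realType) (m n : nat).
Implicit Types (D : detch m n).

Lemma detmxE D i j : detmx R D i j = (D i == j)%:R.
Proof. by rewrite mxE. Qed.

Definition img D : {set 'I_n} := [set j | [exists i, D i == j]].

Lemma drank_img D : (drank R D <= #|img D|)%N.
Proof.
rewrite /drank; set A := img D.
pose P : 'M[R]_(m, #|A|) := \matrix_(i, l) (D i == enum_val l)%:R.
pose Q : 'M[R]_(#|A|, n) := \matrix_(l, j) (enum_val l == j)%:R.
have -> : detmx R D = P *m Q.
  apply/matrixP => i j; rewrite !mxE.
  have DiA : D i \in A by rewrite inE; apply/existsP; exists i.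
  rewrite (bigD1 (enum_rank_in DiA (D i))) //= !mxE enum_rankK_in // eqxx mul1r.
  rewrite big1 ?addr0 // => l /negbTE nl; rewrite !mxE.
  case: eqP => [Dl|]; last by rewrite mul0r.
  by case/negP: nl; apply/eqP/enum_val_inj; rewrite enum_rankK_in.
exact: leq_trans (mxrankM_maxl _ _) (rank_leq_col _).
Qed.

Lemma drank_gt0 D (i0 : 'I_m) : (0 < drank R D)%N.
Proof.
rewrite lt0n /drank mxrank_eq0; apply/negP => /eqP/matrixP/(_ i0 (D i0)).
by rewrite !mxE eqxx => /eqP; rewrite oner_eq0.
Qed.

Lemma drank_ge2 D i1 i2 : D i1 != D i2 -> (2 <= drank R D)%N.
Proof.
move=> neq.
pose f (a : 'I_2) := if a == ord0 then i1 else i2.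
pose g (a : 'I_2) := D (f a).
have ginj a b : (g a == g b) = (a == b).
  case: a b => [[|[|a]] Ha] [[|[|b]] Hb] //; rewrite /g /f /= ?eqxx //.
  - by rewrite (negbTE neq).
  - by rewrite eq_sym (negbTE neq).
pose P : 'M[R]_(2, m) := \matrix_(a, i) (f a == i)%:R.
pose Q : 'M[R]_(n, 2) := \matrix_(j, b) (j == g b)%:R.
have PD : P *m detmx R D = \matrix_(a, j) (D (f a) == j)%:R.
  apply/matrixP => a j; rewrite !mxE (bigD1 (f a)) //= big1 ?addr0.
    by rewrite /P !mxE eqxx mul1r.
  by move=> i ni; rewrite /P !mxE eq_sym (negbTE ni) mul0r.
have E : P *m detmx R D *m Q = 1%:M.
  rewrite PD; apply/matrixP => a b; rewrite !mxE (bigD1 (D (f a))) //= big1 ?addr0.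
    by rewrite /Q !mxE !eqxx mul1r -/(g a) ginj.
  by move=> j nj; rewrite /Q !mxE eq_sym (negbTE nj) mul0r.
have := mxrankM_maxl (P *m detmx R D) Q.
rewrite E mxrank1 => h; apply: leq_trans h (mxrankM_maxr _ _).
Qed.


Lemma drank_Uch (j : 'I_n) (i0 : 'I_m) : drank R (Uch m j) = 1%N.
Proof.
apply/eqP; rewrite eqn_leq drank_gt0 // andbT.
apply: leq_trans (drank_img _) _.
rewrite -(cards1 j); apply: subset_leq_card; apply/fintype.subsetP => k.
by rewrite !inE => /existsP [i]; rewrite ffunE => /eqP ->.
Qed.

Lemma drank1P D (i0 : 'I_m) : drank R D = 1%N -> D = Uch m (D i0).
Proof.
move=> h; apply/ffunP => i; rewrite ffunE.
have : (drank R D < 2)%N by rewrite h.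
rewrite ltnNge => /negP H; apply/eqP/negPn/negP => ne; apply: H; exact: drank_ge2 ne.
Qed.

Definition cnt D (j : 'I_n) : nat := #|[set i | D i == j]|.

Lemma sum_cnt D : (\sum_j cnt D j)%N = m.
Proof.
rewrite /cnt.
under eq_bigr => j _ do rewrite -sum1dep_card.
rewrite (exchange_big_dep xpredT) //=.
rewrite -[m in RHS]card_ord -sum1_card; apply: eq_bigr => i _.
by rewrite (big_pred1 (D i)) // => j; rewrite eq_sym.
Qed.

Lemma img_count D (b : 'I_n -> nat) : (forall j, b j <= cnt D j)%N ->
  (#|img D| + \sum_j b j <= m + #|[set j | b j != 0%N]|)%N.
Proof.
move=> hb.
have c1 : #|img D| = (\sum_j ((0 < cnt D j)%N : nat))%N.
  rewrite -sum1_card big_mkcond /=; apply: eq_bigr => j _.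
  have -> : (j \in img D) = (0 < cnt D j)%N.
    rewrite /img /cnt inE.
    by apply/existsP/card_gt0P => -[i Hi]; exists i; rewrite ?inE in Hi *.
  by case: (0 < cnt D j)%N.
have c2 : #|[set j | b j != 0%N]| = (\sum_j (b j != 0%N))%N.
  rewrite -sum1_card big_mkcond /=; apply: eq_bigr => j _.
  by rewrite inE; case: (b j != 0%N).
rewrite c1 c2 -{1}(sum_cnt D) -!big_split /=; apply: leq_sum => j _.
have := hb j; case: (cnt D j) => [|c]; case: (b j) => [|b'] //=; lia.
Qed.

End Rank.


Section Generic.
Variable R : realType.

Lemma kernel_lemma (I J : finType) (PI : pred I) (PJ : pred J) (a : I -> J -> R) :
  (#|PJ| < #|PI|)%N ->
  exists y : I -> R, (exists i, y i != 0) /\ (forall i, ~~ PI i -> y i = 0) /\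
    (forall j, PJ j -> \sum_i y i * a i j = 0).
Proof.
move=> hc.
pose A : 'M[R]_(#|PI|, #|PJ|) := \matrix_(k, l) a (enum_val k) (enum_val l).
have : kermx A != 0.
  apply/negP => /eqP K0.
  have := mxrank_ker A; rewrite K0 mxrank0 => /esym/eqP; rewrite subn_eq0 => h.
  by move: (leq_trans h (rank_leq_col A)); rewrite leqNgt hc.
case/matrix0Pn => k0 [l0 nz].
pose u := row k0 (kermx A).
have uA : u *m A = 0 by rewrite /u -row_mul mulmx_ker row0.
exists (fun i => \sum_k u 0 k * (enum_val k == i)%:R); split; [|split].
- exists (enum_val l0).
  rewrite (bigD1 l0) //= eqxx mulr1 big1 ?addr0; first by rewrite /u mxE.
  by move=> k nk; rewrite (inj_eq enum_val_inj) (negbTE nk) mulr0.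
- move=> i ni; apply: big1 => k _.
  case: eqP => [e|]; last by rewrite mulr0.
  by move: ni; rewrite -e => /negP []; exact: enum_valP.
- move=> j Pj.
  have := congr1 (fun M : 'rV[R]_#|PJ| => M 0 (enum_rank_in Pj j)) uA; rewrite !mxE => E; apply: (etrans _ E).
  transitivity (\sum_i \sum_k u 0 k * (enum_val k == i)%:R * a i j).
    by apply: eq_bigr => i _; rewrite mulr_suml.
  rewrite exchange_big /=; apply: eq_bigr => k _.
  rewrite (bigD1 (enum_val k)) //= eqxx mulr1 big1 ?addr0.
    by rewrite !mxE enum_rankK_in.
  by move=> i ni; rewrite eq_sym (negbTE ni) mulr0 mul0r.
Qed.

Lemma GL (K : finType) (p q : K -> R) :
  (forall k, 0 <= p k) -> (forall k, q k < 0 -> 0 < p k) -> (exists k, q k < 0) ->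
  exists t, 0 < t /\ (forall k, 0 <= p k + t * q k) /\
     exists k, q k < 0 /\ p k + t * q k = 0.
Proof.
move=> p0 pq [k0 qk0].
case: (@arg_minP _ R K k0 (fun k => q k < 0) (fun k => p k / - q k) qk0) => ks qks hks.
have nq : 0 < - q ks by rewrite oppr_gt0.
exists (p ks / - q ks); split; [|split].
- by rewrite divr_gt0 // pq.
- move=> k; case: (ltP (q k) 0) => qk.
  + have := hks k qk; rewrite ler_pdivlMr ?oppr_gt0 // => h.
    by move: h; rewrite mulrN -subr_ge0 opprK addrC.
  + by apply: addr_ge0 => //; apply: mulr_ge0 => //; apply: ltW; rewrite divr_gt0 // pq.
- exists ks; split => //.
  have qn : q ks != 0 by rewrite lt_eqF.
  by rewrite invrN mulrN mulNr -mulrA mulVf // mulr1 subrr.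
Qed.

Lemma one_frac (I : finType) (v : I -> R) (i1 : I) (N : int) :
  (forall i, i != i1 -> v i = 0 \/ v i = 1) -> 0 < v i1 < 1 ->
  \sum_i v i = N%:~R -> False.
Proof.
move=> h01 /andP [h0 h1].
rewrite (bigD1 i1) //=.
have -> : \sum_(i | i != i1) v i = (\sum_(i | i != i1) ((v i == 1%R) : nat))%:R.
  rewrite natr_sum; apply: eq_bigr => i ni.
  by case: (h01 i ni) => ->; rewrite ?eqxx // eq_sym oner_eq0.
set k := (\sum_(i | _) _)%N => e.
have ev : v i1 = (N - k%:Z)%:~R by rewrite intrB -e addrK.
rewrite ev in h0 h1.
rewrite ltr0z in h0. rewrite -[1]/((1:int)%:~R) ltr_int in h1. lia.
Qed.

Lemma exists_neg (I : finType) (v : I -> R) (i0 : I) :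
  \sum_i v i = 0 -> v i0 != 0 -> exists i, v i < 0.
Proof.
move=> s0 nz; apply/not_existsP => hn.
have hp : forall i, 0 <= v i by move=> i; rewrite leNgt; apply/negP => /(@hn i).
have := psumr_eq0P (P := xpredT) (fun i _ => hp i) s0.
by move=> /(_ i0 isT) /eqP; rewrite (negbTE nz).
Qed.

End Generic.


Section DT.
Variables (R : realType) (m n : nat).
Implicit Types (X Y : 'M[R]_(m, n)) (b : 'I_n -> nat).

Definition csum X j := \sum_i X i j.
Definition feasible b X := [/\ forall i j, 0 <= X i j, forall i, \sum_j X i j = 1
   & forall j, (b j)%:R <= csum X j].
Definition decomp b X := exists mu : {ffun detch m n -> R},
  [/\ forall D, 0 <= mu D, \sum_D mu D = 1, X = \sum_D mu D *: detmx R D &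
      forall D, mu D != 0 -> forall j, (b j <= cnt D j)%N].
Definition msr b X := addn #|[set p : 'I_m * 'I_n | X p.1 p.2 != 0]|
   #|[set j | csum X j != (b j)%:R]|.

Lemma feas_le1 b X i j : feasible b X -> X i j <= 1.
Proof. by case=> h0 h1 _; rewrite -(h1 i) (bigD1 j) //= lerDl sumr_ge0. Qed.

Lemma sum_nat_card (T : finType) (P : pred T) : (\sum_i (P i : nat))%N = #|P|.
Proof. by rewrite -sum1_card [RHS]big_mkcond /=; apply: eq_bigr => i _; rewrite unfold_in; case: (P i). Qed.

Lemma det_case (j0 : 'I_n) b X : feasible b X ->
  (forall i j, X i j = 0 \/ X i j = 1) -> decomp b X.
Proof.
move=> hf h01; have [h0 h1 hc] := hf.
pose D : detch m n := [ffun i => odflt j0 [pick j | X i j == 1]].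
have XD i j : X i j = (D i == j)%:R.
  rewrite ffunE; case: pickP => [j1 /eqP Xj1 | none] /=.
    case: (j1 =P j) => [<-|ne]; first by rewrite Xj1.
    case: (h01 i j) => // Xj; exfalso.
    have := h1 i; rewrite (bigD1 j1) //= (bigD1 j) /=; last by rewrite eq_sym; apply/eqP.
    rewrite Xj1 Xj => e.
    have : 0 <= \sum_(k | (k != j1) && (k != j)) X i k by apply: sumr_ge0.
    lra.
  exfalso.
  have : \sum_j X i j = 0.
    apply: big1 => k _; case: (h01 i k) => // e.
    by have := none k; rewrite e eqxx.
  by rewrite h1 => /eqP; rewrite oner_eq0.
have XeqD : X = detmx R D by apply/matrixP => i j; rewrite mxE XD.
exists [ffun D' => (D' == D)%:R]; split.
- by move=> D'; rewrite ffunE ler0n.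
- rewrite (bigD1 D) //= ffunE eqxx big1 ?addr0 // => D' nD.
  by rewrite ffunE (negbTE nD).
- rewrite (bigD1 D) //= ffunE eqxx scale1r big1 ?addr0 // => D' nD.
  by rewrite ffunE (negbTE nD) scale0r.
- move=> D'; rewrite ffunE; case: (D' =P D) => [-> _ j|]; last by rewrite eqxx.
  have := hc j; rewrite /csum (eq_bigr _ (fun i _ => XD i j)) -natr_sum ler_nat.
  by rewrite sum_nat_card /cnt; move/leq_trans; apply; rewrite subset_leq_card //;
    apply/fintype.subsetP => i; rewrite inE.
Qed.

Lemma csumD X Y t j : csum (X + t *: Y) j = csum X j + t * csum Y j.
Proof. by rewrite /csum mulr_sumr -big_split; apply: eq_bigr => i _; rewrite !mxE. Qed.

Lemma rsumD X Y t i : \sum_j (X + t *: Y) i j = \sum_j X i j + t * \sum_j Y i j.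
Proof. by rewrite mulr_sumr -big_split; apply: eq_bigr => j _; rewrite !mxE. Qed.

Definition Ygood b X Y := [/\ forall i j, Y i j != 0 -> 0 < X i j,
  forall i, \sum_j Y i j = 0 & forall j, csum X j = (b j)%:R -> csum Y j = 0].

Lemma one_side b X Y : feasible b X -> Ygood b X Y -> (exists i j, Y i j < 0) ->
  exists t, [/\ 0 < t, feasible b (X + t *: Y) & (msr b (X + t *: Y) < msr b X)%N].
Proof.
move=> hf [hsupp hrow htight] [i0 [j0 neg]]; have [h0 h1 hc] := hf.
pose K := ('I_m * 'I_n + 'I_n)%type.
pose p (k : K) := match k with inl ij => X ij.1 ij.2 | inr j => csum X j - (b j)%:R end.
pose q (k : K) := match k with inl ij => Y ij.1 ij.2 | inr j => csum Y j end.
have [t [t0 ht [ks [qks pks]]]] : exists t, [/\ 0 < t, (forall k, 0 <= p k + t * q k) &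
     exists k, q k < 0 /\ p k + t * q k = 0].
  have g1 : forall k, 0 <= p k.
    by case=> [[i j]|j] /=; [exact: h0 | rewrite subr_ge0].
  have g2 : forall k, q k < 0 -> 0 < p k.
    case=> [[i j]|j] /= qn; first by apply: hsupp; rewrite lt_eqF.
    rewrite subr_gt0 lt_def hc andbT; apply/eqP => e.
    by move: qn; rewrite htight // ltxx.
  have g3 : exists k, q k < 0 by exists (inl (i0, j0)).
  have [t [t0 [ht hk]]] := @GL R K p q g1 g2 g3.
  by exists t.
exists t; split => //.
  split.
  - by move=> i j; rewrite !mxE; apply: (ht (inl (i, j))).
  - by move=> i; rewrite rsumD h1 hrow mulr0 addr0.
  - by move=> j; rewrite csumD -subr_ge0 addrAC; apply: (ht (inr j)).
have sS : [set p : 'I_m * 'I_n | (X + t *: Y) p.1 p.2 != 0] \subset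
          [set p : 'I_m * 'I_n | X p.1 p.2 != 0].
  apply/fintype.subsetP => -[i j]; rewrite !inE !mxE /=.
  apply: contraNN => /eqP X0.
  have Y0 : Y i j = 0 by apply/eqP; apply: contraT => /hsupp; rewrite X0 ltxx.
  by rewrite X0 Y0 mulr0 addr0.
have sT : [set j | csum (X + t *: Y) j != (b j)%:R] \subset [set j | csum X j != (b j)%:R].
  apply/fintype.subsetP => j; rewrite !inE; apply: contraNN => /eqP e.
  by rewrite csumD e htight // mulr0 addr0.
rewrite /msr; case: ks qks pks => [[i j]|j] /= qks pks.
- have : [set p : 'I_m * 'I_n | (X + t *: Y) p.1 p.2 != 0] \proper
         [set p : 'I_m * 'I_n | X p.1 p.2 != 0].
    apply/properP; split => //; exists (i, j); rewrite !inE /=.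
      by rewrite lt0r_neq0 // hsupp // lt_eqF.
    by rewrite !mxE pks eqxx.
  move/proper_card => ha; have hb := subset_leq_card sT; by rewrite -addSn leq_add.
- have : [set j | csum (X + t *: Y) j != (b j)%:R] \proper [set j | csum X j != (b j)%:R].
    apply/properP; split => //; exists j; rewrite !inE.
      by apply/eqP => e; move: qks; rewrite htight // ltxx.
    by rewrite csumD -subr_eq0 addrAC pks eqxx.
  move/proper_card => hb; have ha := subset_leq_card sS; by rewrite -addnS leq_add.
Qed.


Lemma sum_set_card (T : finType) (A : {set T}) : (\sum_i ((i \in A) : nat))%N = #|A|.
Proof. by rewrite -sum1_card [RHS]big_mkcond /=; apply: eq_bigr => i _; case: (i \in A). Qed.

Lemma card_sumpred (I J : finType) (P1 : pred I) (P2 : pred J) :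
  #|(fun c : I + J => match c with inl i => P1 i | inr j => P2 j end)| = (#|P1| + #|P2|)%N.
Proof. by rewrite -!sum_nat_card big_sumType. Qed.

Lemma sum_pair (G : 'I_m * 'I_n -> R) : \sum_p G p = \sum_i \sum_j G (i, j).
Proof. by rewrite pair_big /=; apply: eq_big => // -[i j]. Qed.

Lemma sum_pairN (G : 'I_m * 'I_n -> nat) : (\sum_p G p = \sum_i \sum_j G (i, j))%N.
Proof. by rewrite pair_big /=; apply: eq_big => // -[i j]. Qed.

Lemma step_Y b X : feasible b X -> ~ (forall i j, X i j = 0 \/ X i j = 1) ->
  exists Y, (exists i j, Y i j != 0) /\ Ygood b X Y.
Proof.
move=> hf hn; have [h0 h1 hc] := hf.
have hle1 i j : X i j <= 1 by apply: feas_le1 hf.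
pose F := [set p : 'I_m * 'I_n | (0 < X p.1 p.2) && (X p.1 p.2 < 1)].
have notF i j : (i, j) \notin F -> X i j = 0 \/ X i j = 1.
  rewrite inE /= negb_and -!leNgt => /orP [h|h]; [left | right]; apply/eqP;
    by rewrite eq_le ?h ?h0 ?hle1.
have [p0 p0F] : exists p, p \in F.
  case: (set_0Vmem F) => [F0|[p pF]]; last by exists p.
  by exfalso; apply: hn => i j; apply: notF; rewrite F0 inE.
pose tight j := csum X j == (b j)%:R.
pose RF := [set i | [exists j, (i, j) \in F]].
pose TF := [set j | tight j && [exists i, (i, j) \in F]].
pose dr i := #|[set j | (i, j) \in F]|.
pose dc j := #|[set i | (i, j) \in F]|.
have degR i : i \in RF -> (2 <= dr i)%N.
  rewrite inE => /existsP [j1 Fj1].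
  rewrite leqNgt; apply/negP => small.
  apply: (@one_frac R _ (X i) j1 1).
  - move=> j nj; apply: notF; apply/negP => Fj.
    have : (#|[set j1; j]| <= dr i)%N.
      by apply: subset_leq_card; apply/fintype.subsetP => k; rewrite !in_set2 => /orP [] /eqP ->; rewrite finset.in_set.
    rewrite cards2 eq_sym nj => h; lia.
  - by move: Fj1; rewrite inE.
  - by rewrite h1.
have degC j : j \in TF -> (2 <= dc j)%N.
  rewrite inE => /andP [tj /existsP [i1 Fi1]].
  rewrite leqNgt; apply/negP => small.
  apply: (@one_frac R _ (fun i => X i j) i1 (b j)%:Z).
  - move=> i ni; apply: notF; apply/negP => Fi.
    have : (#|[set i1; i]| <= dc j)%N.
      by apply: subset_leq_card; apply/fintype.subsetP => k; rewrite !in_set2 => /orP [] /eqP ->; rewrite finset.in_set.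
    rewrite cards2 eq_sym ni => h; lia.
  - by move: Fi1; rewrite inE.
  - by move/eqP: tj.
have cardFr : #|F| = (\sum_i dr i)%N.
  rewrite -sum_set_card sum_pairN; apply: eq_bigr => i _.
  by rewrite /dr -sum_set_card; apply: eq_bigr => j _; rewrite finset.in_set.
have cardFc : #|F| = (\sum_j dc j)%N.
  rewrite -sum_set_card sum_pairN exchange_big; apply: eq_bigr => j _.
  by rewrite /dc -sum_set_card; apply: eq_bigr => i _; rewrite finset.in_set.
have F2R : (2 * #|RF| <= #|F|)%N.
  rewrite cardFr -sum_set_card big_distrr /=; apply: leq_sum => i _.
  by case: (boolP (i \in RF)) => hi; rewrite ?muln1 ?muln0 //; apply: degR.
have F2T : (2 * #|TF| <= #|F|)%N.
  rewrite cardFc -sum_set_card big_distrr /=; apply: leq_sum => j _.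
  by case: (boolP (j \in TF)) => hj; rewrite ?muln1 ?muln0 //; apply: degC.
pose a (p : 'I_m * 'I_n) (c : 'I_m + 'I_n) : R :=
  match c with inl i => (p.1 == i)%:R | inr j => (p.2 == j)%:R end.
have build : forall PJ : pred ('I_m + 'I_n), (#|PJ| < #|F|)%N -> exists Y : 'M[R]_(m, n),
    [/\ exists i j, Y i j != 0, forall i j, Y i j != 0 -> (i, j) \in F,
        forall i, PJ (inl i) -> \sum_j Y i j = 0 &
        forall j, PJ (inr j) -> csum Y j = 0].
  move=> PJ hcard.
  have [y [[p ynz] [ysupp ycon]]] := @kernel_lemma R _ _ (fun p => p \in F) PJ a hcard.
  exists (\matrix_(i, j) y (i, j)); split.
  - by exists p.1, p.2; rewrite mxE -surjective_pairing.
  - move=> i j; rewrite mxE; apply: contraR => nF; exact/eqP/ysupp.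
  - move=> i Pi; have E := ycon _ Pi; apply: (etrans _ E); symmetry.
    rewrite sum_pair (bigD1 i) //= [X in _ + X]big1 ?addr0.
      by apply: eq_bigr => j _; rewrite mxE eqxx mulr1.
    by move=> i' ni; apply: big1 => j _; rewrite (negbTE ni) mulr0.
  - move=> j Pj; have E := ycon _ Pj; apply: (etrans _ E); symmetry.
    rewrite sum_pair exchange_big (bigD1 j) //= [X in _ + X]big1 ?addr0.
      by apply: eq_bigr => i _; rewrite mxE eqxx mulr1.
    by move=> j' nj; apply: big1 => i _; rewrite (negbTE nj) mulr0.
have posF i j : (i, j) \in F -> 0 < X i j by rewrite inE => /andP [].
have colz Y j : (forall i j, Y i j != 0 -> (i, j) \in F) ->
    (forall i, (i, j) \notin F) -> csum Y j = 0.
  move=> hY hj; apply: big1 => i _; apply/eqP; apply: contraT => /hY.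
  by rewrite (negbTE (hj i)).
have rowz Y : (forall i j, Y i j != 0 -> (i, j) \in F) ->
    (forall i, i \in RF -> \sum_j Y i j = 0) -> forall i, \sum_j Y i j = 0.
  move=> hY hR i; case: (boolP (i \in RF)) => hi; first exact: hR.
  apply: big1 => j _; apply/eqP; apply: contraT => /hY Fij.
  by move: hi; rewrite inE; case/existsP; exists j.
case: (boolP [exists p in F, ~~ tight p.2]) => [/existsP [p1 /andP [p1F p1t]] | allT].
- pose PJ (c : 'I_m + 'I_n) := match c with inl i => i \in RF | inr j => j \in TF end.
  have hcard : (#|PJ| < #|F|)%N.
    rewrite card_sumpred.
    have : (2 * #|TF| + 1 <= #|F|)%N.
      have s1 : (\sum_j ((j == p1.2) : nat))%N = 1%N.
        by rewrite (bigD1 p1.2) //= eqxx big1 // => j /negbTE ->.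
      have : (\sum_j (2 * (j \in TF) + (j == p1.2)) <= \sum_j dc j)%N.
        apply: leq_sum => j _.
        case: (j =P p1.2) => [->|ne].
          have -> : (p1.2 \in TF) = false by rewrite inE (negbTE p1t).
          rewrite muln0 add0n card_gt0; apply/set0Pn; exists p1.1.
          by rewrite inE -surjective_pairing.
        rewrite addn0.
        by case: (boolP (j \in TF)) => hj; rewrite ?muln1 ?muln0 //; apply: degC.
      by rewrite big_split /= s1 -big_distrr /= sum_set_card -cardFc.
    have h1' : (#|fun i => i \in RF| = #|RF|)%N by [].
    have h2' : (#|fun j => j \in TF| = #|TF|)%N by [].
    rewrite h1' h2'; lia.
  have [Y [Ynz YF YR YC]] := build PJ hcard.
  exists Y; split => //; split.
  + by move=> i j /YF /posF.
  + by apply: rowz.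
  + move=> j tj; case: (boolP (j \in TF)) => hj; first exact: YC.
    apply: colz => // i; apply: contra hj => Fij.
    by rewrite inE; apply/andP; split; [apply/eqP | apply/existsP; exists i].
- pose jt := p0.2.
  have tjt : tight jt.
    by apply: contraR allT => nt; apply/existsP; exists p0; rewrite p0F.
  have jtT : jt \in TF.
    by rewrite inE tjt /=; apply/existsP; exists p0.1; rewrite -surjective_pairing.
  pose PJ (c : 'I_m + 'I_n) := match c with inl i => i \in RF
                                    | inr j => (j \in TF) && (j != jt) end.
  have hcard : (#|PJ| < #|F|)%N.
    rewrite card_sumpred.
    have h1' : (#|fun i => i \in RF| = #|RF|)%N by [].
    have h2' : (#|fun j => (j \in TF) && (j != jt)| = #|TF :\ jt|)%N.
      by apply: eq_card => j; rewrite in_setD1 andbC unfold_in.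
    have := cardsD1 jt TF; rewrite jtT h1' h2' => e.
    lia.
  have [Y [Ynz YF YR YC]] := build PJ hcard.
  have Yrow := rowz Y YF YR.
  have other j : j != jt -> csum Y j = 0.
    move=> nj; case: (boolP (j \in TF)) => hj; first by apply: YC; rewrite /= hj.
    apply: colz => // i; apply: contra hj => Fij.
    rewrite inE; apply/andP; split; last by apply/existsP; exists i.
    apply: contraR allT => nt; apply/existsP; exists (i, j); by rewrite Fij.
  exists Y; split => //; split.
  + by move=> i j /YF /posF.
  + exact: Yrow.
  + move=> j _; case: (j =P jt) => [->|/eqP ne]; last exact: other.
    have tot : \sum_j csum Y j = 0.
      by rewrite /csum exchange_big; apply: big1 => i _; apply: Yrow.
    by move: tot; rewrite (bigD1 jt) //= big1 ?addr0 // => j' nj'; apply: other.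
Qed.

Lemma DT (j0 : 'I_n) b X : feasible b X -> decomp b X.
Proof.
suff H : forall k b X, (msr b X < k)%N -> feasible b X -> decomp b X.
  by move=> hf; apply: (H (msr b X).+1).
elim=> [//|k IH] {}b {}X hk hf.
case: (pselect (forall i j, X i j = 0 \/ X i j = 1)) => [h01|hn].
  exact: (@det_case j0 b X hf h01).
have [Y [[i0 [j0' nz]] [hsupp hrow htight]]] := step_Y hf hn.
have [j1 neg] := @exists_neg R _ (fun j => Y i0 j) j0' (hrow i0) nz.
have [j2 pos] : exists j, 0 < Y i0 j.
  have s0 : \sum_j (- Y i0 j) = 0 by rewrite sumrN hrow oppr0.
  have nz' : - Y i0 j0' != 0 by rewrite oppr_eq0.
  have [j2 h] := @exists_neg R _ (fun j => - Y i0 j) j0' s0 nz'.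
  by exists j2; rewrite -oppr_lt0.
have gY : Ygood b X Y by split.
have gN : Ygood b X (- Y).
  split.
  - by move=> i j; rewrite mxE oppr_eq0; apply: hsupp.
  - move=> i; rewrite (eq_bigr (fun j => - Y i j)) ?sumrN ?hrow ?oppr0 // => j _.
    by rewrite mxE.
  - move=> j tj; rewrite /csum (eq_bigr (fun i => - Y i j)) ?sumrN; last by move=> i _; rewrite mxE.
    by have := htight j tj; rewrite /csum => ->; rewrite oppr0.
have [t1 [t10 hf1 hm1]] := one_side hf gY (ex_intro _ i0 (ex_intro _ j1 neg)).
have neg2 : exists i j, (- Y) i j < 0 by exists i0, j2; rewrite mxE oppr_lt0.
have [t2 [t20 hf2 hm2]] := one_side hf gN neg2.
have hk' : (msr b X <= k)%N by [].
have [mu1 [m10 m11 m1X m1s]] := IH _ _ (leq_trans hm1 hk') hf1.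
have [mu2 [m20 m21 m2X m2s]] := IH _ _ (leq_trans hm2 hk') hf2.
have tpos : 0 < t1 + t2 by rewrite addr_gt0.
have tne : t1 + t2 != 0 by rewrite lt0r_neq0.
pose c1 := t2 / (t1 + t2); pose c2 := t1 / (t1 + t2).
have c10 : 0 <= c1 by rewrite /c1 divr_ge0 // ltW.
have c20 : 0 <= c2 by rewrite /c2 divr_ge0 // ltW.
exists [ffun D => c1 * mu1 D + c2 * mu2 D]; split.
- by move=> D; rewrite ffunE addr_ge0 // mulr_ge0.
- under eq_bigr => D _ do rewrite ffunE.
  rewrite big_split /= -!mulr_sumr m11 m21 !mulr1.
  by rewrite /c1 /c2 -mulrDl addrC divff.
- apply/matrixP => i j.
  have e1 := congr1 (fun M : 'M[R]_(m, n) => M i j) m1X.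
  have e2 := congr1 (fun M : 'M[R]_(m, n) => M i j) m2X.
  rewrite /= !mxE !summxE in e1 e2.
  rewrite summxE.
  transitivity (c1 * (\sum_D (mu1 D *: detmx R D) i j) +
                c2 * (\sum_D (mu2 D *: detmx R D) i j)).
    by rewrite -e1 -e2 /c1 /c2; field.
  rewrite !mulr_sumr -big_split /=; apply: eq_bigr => D _.
  by rewrite !mxE ffunE mulrDl !mulrA.
- move=> D; rewrite ffunE => nzD j.
  case: (eqVneq (mu1 D) 0) => h1'; last exact: m1s.
  apply: m2s; apply: contra nzD => /eqP h2'.
  by rewrite h1' h2' !mulr0 addr0.
Qed.

End DT.


Section Main.
Variables (R : realType) (m n : nat) (W : 'M[R]_(m, n)).
Variables (i0 : 'I_m) (j0 : 'I_n).
Hypothesis hW0 : forall i j, 0 <= W i j.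
Hypothesis hW1 : forall i, \sum_j W i j = 1.

Lemma al_le i j : alpha W j <= W i j.
Proof. exact: bigmin_le. Qed.

Lemma al_lb x j : x <= 1 -> (forall i, x <= W i j) -> x <= alpha W j.
Proof. by move=> h1 h2; apply: le_bigmin. Qed.

Lemma al_ge0 j : 0 <= alpha W j.
Proof. by apply: al_lb => //; apply: ler01. Qed.

Lemma UsumE (f : 'I_n -> R) i j :
  (\sum_k f k *: detmx R (Uch m k)) i j = f j.
Proof.
rewrite summxE (bigD1 j) //= big1 ?addr0; first by rewrite !mxE ffunE eqxx mulr1.
by move=> k nk; rewrite !mxE ffunE (negbTE nk) mulr0.
Qed.

Definition Wres := W - \sum_j alpha W j *: detmx R (Uch m j).

Lemma WresE i j : Wres i j = W i j - alpha W j.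
Proof. by rewrite /Wres !mxE UsumE. Qed.

Lemma Wres_ge0 i j : 0 <= Wres i j.
Proof. by rewrite WresE subr_ge0 al_le. Qed.

Lemma Wres_row i : \sum_j Wres i j = 1 - \sum_j alpha W j.
Proof.
by under eq_bigr => j _ do rewrite WresE; rewrite sumrB hW1.
Qed.

Lemma c_ge0 : 0 <= 1 - \sum_j alpha W j.
Proof. by rewrite -(Wres_row i0) sumr_ge0 // => j _; apply: Wres_ge0. Qed.

Lemma Plam1E (lam : {ffun detch m n -> R}) : Plam lam 1 = \sum_j lam (Uch m j).
Proof.
rewrite /Plam (partition_big (fun D : detch m n => D i0) xpredT) //=.
apply: eq_bigr => j _; apply: big_pred1 => D /=.
apply/andP/eqP => [[/eqP r1 /eqP Dj]|->].
  by rewrite (drank1P i0 r1) Dj.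
by rewrite drank_Uch // ffunE eqxx.
Qed.

Lemma UB lam : Lambda W lam -> Plam lam 1 <= \sum_j alpha W j.
Proof.
move=> [[l0 l1] WE]; rewrite Plam1E; apply: ler_sum => j _; apply: al_lb.
  by rewrite -l1 (bigD1 (Uch m j)) //= lerDl sumr_ge0.
move=> i; have := congr1 (fun M : 'M[R]_(m, n) => M i j) WE; rewrite /= summxE => ->.
rewrite (bigD1 (Uch m j)) //= !mxE ffunE eqxx mulr1 lerDl sumr_ge0 // => D _.
by rewrite !mxE mulr_ge0.
Qed.


Lemma log2_1 : log2 (1 : R) = 0.
Proof. by rewrite /log2 ln1 mul0r. Qed.

Lemma sum_delta (F : detch m n -> R) (D0 : detch m n) :
  \sum_D F D * (D == D0)%:R = F D0.
Proof.
rewrite (bigD1 D0) //= eqxx mulr1 big1 ?addr0 // => D nD.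
by rewrite (negbTE nD) mulr0.
Qed.

Lemma sum_deltac (a : R) (D0 : detch m n) : \sum_D a * (D == D0)%:R = a.
Proof. exact: (sum_delta (fun _ => a)). Qed.

Lemma sum_delta2 (a : R) (G : detch m n -> R) (D0 : detch m n) :
  \sum_D a * (D == D0)%:R * G D = a * G D0.
Proof.
rewrite (bigD1 D0) //= eqxx mulr1 big1 ?addr0 // => D nD.
by rewrite (negbTE nD) mulr0 mul0r.
Qed.

Definition mklam (mu : {ffun detch m n -> R}) : {ffun detch m n -> R} :=
  [ffun D => (1 - \sum_j alpha W j) * mu D + \sum_j alpha W j * (D == Uch m j)%:R].

Lemma cons_lam (mu : {ffun detch m n -> R}) : (forall D, 0 <= mu D) -> \sum_D mu D = 1 ->
  Wres = (1 - \sum_j alpha W j) *: \sum_D mu D *: detmx R D ->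
  [/\ Lambda W (mklam mu), forall j, alpha W j <= mklam mu (Uch m j) &
      C11 (mklam mu) = (1 - \sum_j alpha W j) * \sum_D mu D * log2 (drank R D)%:R].
Proof.
move=> m0 m1 hres; set c := 1 - \sum_j alpha W j.
have c0 : 0 <= c := c_ge0.
have sw D : \sum_j alpha W j * (D == Uch m j)%:R = \sum_j (D == Uch m j)%:R * alpha W j.
  by apply: eq_bigr => j _; rewrite mulrC.
split.
- split; first split.
  + move=> D; rewrite ffunE addr_ge0 ?mulr_ge0 // sumr_ge0 // => j _.
    by rewrite mulr_ge0 ?al_ge0.
  + under eq_bigr => D _ do rewrite ffunE.
    rewrite big_split /= -mulr_sumr m1 mulr1 exchange_big /=.
    under [X in _ + X = _]eq_bigr => j _ do rewrite sum_deltac.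
    by rewrite /c subrK.
  + apply/matrixP => i j.
    have E := congr1 (fun M : 'M[R]_(m, n) => M i j) hres.
    rewrite /= WresE !mxE summxE -/c in E.
    rewrite summxE.
    under eq_bigr => D _ do rewrite mxE ffunE mulrDl.
    rewrite big_split /=.
    have -> : \sum_D c * mu D * detmx R D i j = c * \sum_D (mu D *: detmx R D) i j.
      by rewrite mulr_sumr; apply: eq_bigr => D _; rewrite !mxE mulrA.
    rewrite -E.
    under eq_bigr => D _ do rewrite mulr_suml.
    rewrite exchange_big /=.
    under eq_bigr => k _ do rewrite sum_delta2 !mxE ffunE.
    rewrite (bigD1 j) //= eqxx mulr1 big1 ?addr0; first by rewrite subrK.
    by move=> k nk; rewrite (negbTE nk) mulr0.
- move=> j; rewrite ffunE; apply: ler_wpDl; first by rewrite mulr_ge0.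
  rewrite (bigD1 j) //= eqxx mulr1 lerDl sumr_ge0 // => k _.
  by rewrite mulr_ge0 ?al_ge0.
- rewrite /C11.
  under eq_bigr => D _ do rewrite ffunE mulrDl.
  rewrite big_split /= mulr_sumr.
  under [X in _ + X]eq_bigr => D _ do rewrite mulr_suml.
  rewrite exchange_big /= [X in _ + X]big1 ?addr0.
    by rewrite /c; apply: eq_bigr => D _; rewrite [RHS]mulrA.
  by move=> k _; rewrite sum_delta2 drank_Uch // log2_1 mulr0.
Qed.


Lemma mu_exists (b : 'I_n -> nat) :
  (0 < 1 - \sum_j alpha W j ->
     forall j, (b j)%:R <= csum ((1 - \sum_j alpha W j)^-1 *: Wres) j) ->
  exists mu : {ffun detch m n -> R}, [/\ forall D, 0 <= mu D, \sum_D mu D = 1,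
     Wres = (1 - \sum_j alpha W j) *: \sum_D mu D *: detmx R D &
     0 < 1 - \sum_j alpha W j -> forall D, mu D != 0 -> forall j, (b j <= cnt D j)%N].
Proof.
set c := 1 - \sum_j alpha W j => hb.
have c0 : 0 <= c := c_ge0.
case: (ltrP 0 c) => [cpos|cle].
  have hf : feasible b (c^-1 *: Wres).
    split.
    - by move=> i j; rewrite mxE mulr_ge0 ?invr_ge0 // Wres_ge0.
    - move=> i; under eq_bigr => j _ do rewrite mxE.
      by rewrite -mulr_sumr Wres_row -/c mulVf // lt0r_neq0.
    - exact: hb.
  have [mu [m0 m1 mX ms]] := DT j0 hf.
  exists mu; split => //; try by move=> _.
  by rewrite -mX scalerA divff ?scale1r // lt0r_neq0.
have c00 : c = 0 by apply/eqP; rewrite eq_le cle c0.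
exists [ffun D => (D == Uch m j0)%:R]; split => //.
- by move=> D; rewrite ffunE ler0n.
- under eq_bigr => D _ do rewrite ffunE.
  by rewrite -[RHS](sum_deltac 1 (Uch m j0)); under [RHS]eq_bigr => D _ do rewrite mul1r.
- rewrite c00 scale0r; apply/matrixP => i j; rewrite [RHS]mxE.
  have := Wres_row i; rewrite -/c c00 => /eqP; rewrite psumr_eq0; last first.
    by move=> k _; apply: Wres_ge0.
  by move=> /allP /(_ j (mem_index_enum _)) /eqP.
Qed.

Lemma ln2_gt0 : 0 < ln (2 : R).
Proof. by apply: ln_gt0; rewrite ltr1n. Qed.

Lemma log2_ge0 (k : nat) : (0 < k)%N -> 0 <= log2 (k%:R : R).
Proof.
move=> k0; rewrite /log2 divr_ge0 //; last exact: ltW ln2_gt0.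
by apply: ln_ge0; rewrite ler1n.
Qed.

Lemma log2_ge1 (k : nat) : (2 <= k)%N -> 1 <= log2 (k%:R : R).
Proof.
move=> k2; rewrite /log2 ler_pdivlMr ?ln2_gt0 // mul1r.
by rewrite ler_ln ?posrE ?ltr0n ?ler_nat //; lia.
Qed.

Lemma log2_le (x y : R) : 0 < x -> x <= y -> log2 x <= log2 y.
Proof.
move=> x0 xy; rewrite /log2; apply: ler_wpM2r.
  by rewrite invr_ge0; exact: ltW ln2_gt0.
by rewrite ler_ln ?posrE // (lt_le_trans x0 xy).
Qed.

Lemma log2_2 : log2 (2 : R) = 1.
Proof. by rewrite /log2 divff // lt0r_neq0 // ln2_gt0. Qed.

Lemma C11_ge0 lam : Lambda W lam -> 0 <= C11 lam.
Proof.
move=> [[l0 _] _]; apply: sumr_ge0 => D _; rewrite mulr_ge0 //.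
exact: log2_ge0 (drank_gt0 R D i0).
Qed.

Lemma C11_lower lam : Lambda W lam -> 1 - Plam lam 1 <= C11 lam.
Proof.
move=> [[l0 l1] _].
have e : \sum_D lam D = \sum_(D | drank R D == 1%N) lam D +
                       \sum_(D | drank R D != 1%N) lam D by apply: bigID.
rewrite l1 in e.
rewrite /C11 /Plam {1}e addrAC subrr add0r.
rewrite [X in _ <= X](bigID (fun D => drank R D == 1%N)) /=.
rewrite [X in _ <= X + _]big1 ?add0r; last by move=> D /eqP ->; rewrite log2_1 mulr0.
apply: ler_sum => D r1; rewrite -{1}[lam D]mulr1 ler_wpM2l //.
apply: log2_ge1; have := drank_gt0 R D i0; move: r1; lia.
Qed.

Lemma C11_bound (mu : {ffun detch m n -> R}) (c r : R) (f : detch m n -> R) :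
  0 <= c -> (forall D, 0 <= mu D) -> \sum_D mu D = 1 ->
  (forall D, mu D != 0 -> f D <= r) -> c * \sum_D mu D * f D <= c * r.
Proof.
move=> c0 m0 m1 hf; rewrite ler_wpM2l //.
rewrite -[r]mul1r -m1 mulr_suml; apply: ler_sum => D _.
case: (eqVneq (mu D) 0) => [->|nz]; first by rewrite !mul0r.
by rewrite ler_wpM2l // hf.
Qed.

Lemma main_res :
  [/\ (exists2 lam, Lambda W lam & Plam lam 1 = Pbar W 1)
        /\ Pbar W 1 = \sum_j alpha W j,
      1 - Pbar W 1 <= C11low W,
      Pbar W 1 = 1 -> C11low W <= 0,
      Pbar W 1 < 1 -> C11low W <= (1 - Pbar W 1) * log2 (gamma W)%:~R
    & (m = 2%N \/ n = 2%N) -> C11low W = 1 - Pbar W 1].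
Proof.
set A := \sum_j alpha W j.
have c0 : 0 <= 1 - A := c_ge0.
have hb0 : 0 < 1 - A -> forall j, ((0%N)%:R : R) <= csum ((1 - A)^-1 *: Wres) j.
  move=> cpos j; apply: sumr_ge0 => i _.
  by rewrite mxE mulr_ge0 ?Wres_ge0 // invr_ge0 ltW.
have [mu0 [m00 m01 m0W _]] := mu_exists hb0.
have [L0 al0 C0] := cons_lam m00 m01 m0W.
set lam0 := mklam mu0.
have PL0 : Plam lam0 1 = A.
  apply/eqP; rewrite eq_le UB //= Plam1E; apply: ler_sum => j _; exact: al0 j.
have PbarA : Pbar W 1 = A.
  rewrite /Pbar; apply/eqP; rewrite eq_le; apply/andP; split.
  - apply: ge_sup; first by exists (Plam lam0 1), lam0.
    by move=> x [lam hl <-]; apply: UB.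
  - rewrite -PL0; apply: sup_upper_bound; last by exists lam0.
    split; first by exists (Plam lam0 1), lam0.
    by exists A => x [lam hl <-]; apply: UB.
have Tne : ([set C11 lam | lam in Lambda W] !=set0)%classic by exists (C11 lam0), lam0.
have Tlb : has_lbound [set C11 lam | lam in Lambda W]%classic.
  by exists 0 => x [lam hl <-]; apply: C11_ge0.
have infle lam : Lambda W lam -> C11low W <= C11 lam.
  by move=> hl; apply: ge_inf => //; exists lam.
have part2 : 1 - Pbar W 1 <= C11low W.
  apply: lb_le_inf => // x [lam hl <-]; rewrite PbarA.
  by apply: le_trans (C11_lower hl); rewrite lerB // UB.
have part3 : Pbar W 1 = 1 -> C11low W <= 0.
  move=> P1; apply: le_trans (infle _ L0) _; rewrite C0.
  have -> : 1 - A = 0 by rewrite -PbarA P1 subrr.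
  by rewrite mul0r.
pose b j := `|avec W j|%N.
have av0 j : 0 <= avec W j.
  rewrite /avec floor_ge0 /Wprime PbarA -/Wres; apply: sumr_ge0 => i _.
  by rewrite [X in _ <= X]mxE mulr_ge0 ?invr_ge0 // Wres_ge0.
have bE j : (b j)%:Z = avec W j by rewrite /b gez0_abs.
have memc j : (j \in [set j | avec W j != 0]%classic) = (avec W j != 0).
  by apply/idP/idP; rewrite in_setE.
have e1 : #|[set j | avec W j != 0]%classic| = #|[set j | b j != 0%N]|.
  by apply: eq_card => j; rewrite memc inE -bE; case: (b j).
have e2 : \sum_j avec W j = (\sum_j b j)%:Z.
  rewrite (big_morph Posz PoszD (erefl _)); apply: eq_bigr => j _; exact/esym/bE.
have key : Pbar W 1 < 1 -> exists lam, Lambda W lam /\ exists mu : {ffun detch m n -> R},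
    [/\ forall D, 0 <= mu D, \sum_D mu D = 1,
        C11 lam = (1 - A) * \sum_D mu D * log2 (drank R D)%:R &
        forall D, mu D != 0 -> (drank R D : int) <= gamma W].
  move=> Plt; have cpos : 0 < 1 - A by rewrite -PbarA subr_gt0.
  have WpE : Wprime W = (1 - A)^-1 *: Wres by rewrite /Wprime PbarA.
  have hb : 0 < 1 - A -> forall j, (b j)%:R <= csum ((1 - A)^-1 *: Wres) j.
    move=> _ j; rewrite -WpE.
    have -> : ((b j)%:R : R) = (avec W j)%:~R by rewrite -bE.
    exact: floor_le.
  have [mu [m0 m1 mW ms]] := mu_exists hb.
  have [L _ C] := cons_lam m0 m1 mW.
  exists (mklam mu); split => //; exists mu; split => //.
  move=> D nz; have hcnt := ms cpos D nz.
  rewrite /gamma le_min; apply/andP; split; last by rewrite lez_nat rank_leq_col.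
  have h := img_count hcnt; have r := drank_img R D.
  rewrite e1 e2; lia.
split.
- split => //; exists lam0 => //; by rewrite PL0 PbarA.
- exact: part2.
- exact: part3.
- move=> Plt; have [lam [hl [mu [m0 m1 C ms]]]] := key Plt.
  apply: le_trans (infle _ hl) _; rewrite C PbarA.
  apply: C11_bound => // D nz; apply: log2_le; first by rewrite ltr0n (drank_gt0 R D i0).
  by rewrite -[X in X <= _]/((Posz (drank R D))%:~R) ler_int ms.
- move=> h25; apply/eqP; rewrite eq_le part2 andbT.
  case: (eqVneq (Pbar W 1) 1) => [P1|P1]; first by rewrite P1 subrr part3.
  have Plt : Pbar W 1 < 1 by rewrite lt_neqAle P1 PbarA -subr_ge0.
  have [lam [hl [mu [m0 m1 C ms]]]] := key Plt.
  apply: le_trans (infle _ hl) _; rewrite C PbarA -[X in _ <= X]mulr1.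
  apply: C11_bound => // D nz.
  rewrite -[X in _ <= X]log2_2; apply: log2_le; first by rewrite ltr0n (drank_gt0 R D i0).
  have g2 : gamma W <= 2.
    case: h25 => [m2|n2].
    + rewrite /gamma ge_min; apply/orP; left.
      have hw : (#|[set j | b j != 0%N]| <= \sum_j b j)%N.
        rewrite -sum_set_card; apply: leq_sum => j _; rewrite inE.
        by case: (b j).
      rewrite e1 e2 m2; lia.
    + by rewrite /gamma ge_min; apply/orP; right; rewrite n2.
  have hr := ms D nz.
  have : (drank R D <= 2)%N by lia.
  by rewrite -(ler_nat R).
Qed.

End Main.

Unset Implicit Arguments.
Local Open Scope classical_set_scope.
Local Open Scope ring_scope.

Theorem theorem1 (R : realType) (m n : nat) (W : 'M[R]_(m, n)) :
  (2 <= m)%N -> (2 <= n)%N -> channel W ->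
  [/\ (exists2 lam, Lambda W lam & Plam lam 1 = Pbar W 1)
        /\ Pbar W 1 = \sum_j alpha W j,
      1 - Pbar W 1 <= C11low W,
      Pbar W 1 = 1 -> C11low W <= 0,
      Pbar W 1 < 1 -> C11low W <= (1 - Pbar W 1) * log2 (gamma W)%:~R
    & (m = 2%N \/ n = 2%N) -> C11low W = 1 - Pbar W 1].
Proof.
move=> hm hn [hW0 hW1].
have m0 : (0 < m)%N by apply: ltnW.
have n0 : (0 < n)%N by apply: ltnW.
exact: (main_res (Ordinal m0) (Ordinal n0) hW0 hW1).
Qed.
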